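(* Let $n\geq 3$ and $k\geq 2$ be integers. Then $$\Phi_k (P_n^2)=\frac{1}{8}\left( k^{n^2} -k^{\lceil \frac{n^2}{2}\rceil} - 2k^{n\lceil\frac{n}{2}\rceil}-2k^{\frac{n(n+1)}{2} } +2k^{\lceil \frac{n}{2}\rceil^2}+2k^{\lceil \frac{n}{2}\rceil \lceil \frac{n+1}{2}\rceil}\right).$$
   Context: $P_n$ is the path on $n$ vertices and $P_n^2=P_n\square P_n$ is the Cartesian product ($V(G\square H)=V(G)\times V(H)$, $(g,h)\sim(g',h')$ iff $g=g'$ and $hh'\in E(H)$, or $gg'\in E(G)$ and $h=h'$), i.e. the $n\times n$ grid. A vertex coloring is distinguishing if the identity is the only automorphism preserving it. Two colorings $c_1,c_2$ of a graph $G$ are equivalent if there is an automorphism $\alpha$ of $G$ with $c_1(v)=c_2(\alpha(v))$ for all $v\in V(G)$. $\Phi_k(G)$ denotes the number of non-equivalent distinguishing vertex colorings of $G$ with colors from $\{1,\ldots,k\}$ (not all colors need be used). *)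

(* Defs.v *)
From mathcomp Require Import all_boot all_order all_fingroup all_algebra.
Set Implicit Arguments. Unset Strict Implicit. Unset Printing Implicit Defensive.

Definition is_graph_aut (V : finType) (e : rel V) (a : {perm V}) : bool :=
  [forall x, forall y, e x y == e (a x) (a y)].

(* Vertex colorings with colors from a k-element set (colors 0..k-1 stand for 1..k). *)
Definition coloring (V : finType) (k : nat) := {ffun V -> 'I_k}.

Definition distinguishing (V : finType) (e : rel V) (k : nat) (c : coloring V k) : bool :=
  [forall a : {perm V}, (is_graph_aut e a && [forall v, c (a v) == c v]) ==> (a == 1%g)].

Definition equiv_colorings (V : finType) (e : rel V) (k : nat) (c1 c2 : coloring V k) : bool :=
  [exists a : {perm V}, is_graph_aut e a && [forall v, c1 v == c2 (a v)]].

Definition Phi (V : finType) (e : rel V) (k : nat) : nat :=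
  #|[set [set c2 : coloring V k | equiv_colorings e c1 c2]
     | c1 in [set c : coloring V k | distinguishing e c]]|.

Definition path_adj (n : nat) (i j : 'I_n) : bool :=
  (i.+1 == j :> nat) || (j.+1 == i :> nat).

Definition cart_adj (V W : finType) (eG : rel V) (eH : rel W) : rel (V * W) :=
  fun x y => ((x.1 == y.1) && eH x.2 y.2) || (eG x.1 y.1 && (x.2 == y.2)).

Definition grid_adj (n : nat) : rel ('I_n * 'I_n) :=
  cart_adj (@path_adj n) (@path_adj n).

(* Main.v *)
Require Import Defs.
From mathcomp Require Import all_boot all_order all_fingroup all_algebra.
From mathcomp Require Import zify ring lra.
Set Implicit Arguments. Unset Strict Implicit. Unset Printing Implicit Defensive.


Section Generic.
Variables (T : finType) (k : nat).

Lemma card_retract (F : {set coloring T k}) (S : {set T}) (rho : T -> T) :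
  (forall v, rho v \in S) -> (forall s, s \in S -> rho s = s) ->
  (forall c, (c \in F) = [forall v, c v == c (rho v)]) -> #|F| = k ^ #|S|.
Proof.
move=> rS rF hF.
pose psi (f : {ffun {x : T | x \in S} -> 'I_k}) : coloring T k :=
  [ffun v => f (exist _ (rho v) (rS v))].
have psi_inj : injective psi.
  move=> f g eq; apply/ffunP => [[x xS]].
  have := congr1 (fun h : coloring T k => h x) eq; rewrite /psi !ffunE.
  have -> : exist (fun x => x \in S) (rho x) (rS x) = exist _ x xS.
    by apply: val_inj; rewrite /= rF.
  done.
have -> : F = [set psi f | f in setT].
  apply/setP => c; rewrite hF; apply/forallP/imsetP.
  - move=> H; exists [ffun x : {x : T | x \in S} => c (val x)]; first by rewrite inE.
    apply/ffunP => v; rewrite /psi !ffunE /=; exact/eqP/H.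
  - move=> [f _ ->] v; rewrite /psi !ffunE; apply/eqP; f_equal; apply: val_inj.
    by rewrite /= (rF (rho v)) ?rS.
rewrite card_imset // cardsT card_ffun card_ord card_sig; congr (_ ^ _).

Qed.

Lemma half_card (W S : {set T}) (g : T -> T) :
  involutive g -> (forall v, v \in W -> g v \in W) -> S \subset W ->
  (forall v, v \in W -> (v \in S) || (g v \in S)) ->
  (forall v, v \in S -> g v \in S -> g v = v) ->
  #|S| * 2 = #|W| + #|[set v in W | g v == v]|.
Proof.
move=> gK gW sSW hWS hS.
have ginj : injective g := inv_inj gK.
have eW : W = S :|: g @: S.
  apply/setP=> v; rewrite inE; apply/idP/orP.
  - move=> vW; case/orP: (hWS v vW) => h; [by left | right].
    by apply/imsetP; exists (g v) => //; rewrite gK.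
  - case=> [vS|/imsetP [w wS ->]]; first exact: (subsetP sSW).
    exact/gW/(subsetP sSW).
have eI : S :&: g @: S = [set v in W | g v == v].
  apply/setP => v; rewrite !inE; apply/andP/andP.
  - case=> vS /imsetP [w wS ev]; split; first exact: (subsetP sSW).
    apply/eqP; apply: hS => //; by rewrite ev gK.
  - case=> vW /eqP gv; have vS : v \in S by case/orP: (hWS v vW) => //; rewrite gv.
    split => //; apply/imsetP; exists v => //.
have cW : #|W| = #|S| + #|S| - #|[set v in W | g v == v]|.
  by rewrite {1}eW cardsU card_imset // eI.
have : #|[set v in W | g v == v]| <= #|S|.
  by rewrite -eI; apply: subset_leq_card; apply: subsetIl.
lia.
Qed.

End Generic.

Definition fixs (T : finType) k (g : T -> T) : {set coloring T k} :=
  [set c : coloring T k | [forall v, c (g v) == c v]].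

Section Generic2.
Variables (T : finType) (k : nat).

Lemma fixsP (g : T -> T) (c : coloring T k) : reflect (forall v, c (g v) = c v) (c \in fixs k g).
Proof. by rewrite inE; apply: (iffP forallP) => h v; apply/eqP. Qed.

Lemma fix_comp (g g1 g2 : T -> T) (c : coloring T k) : (forall v, g v = g1 (g2 v)) ->
  c \in fixs k g1 -> c \in fixs k g2 -> c \in fixs k g.
Proof. by move=> E /fixsP h1 /fixsP h2; apply/fixsP => v; rewrite E h1 h2. Qed.

Lemma fix_card1 (g : T -> T) (S : {set T}) : involutive g ->
  (forall v, (v \in S) || (g v \in S)) -> (forall v, v \in S -> g v \in S -> g v = v) ->
  #|fixs k g| = k ^ #|S|.
Proof.
move=> gK hS hS2.
apply: (card_retract (rho := fun v => if v \in S then v else g v)).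
- by move=> v; case: ifP => // /negbT vS; move: (hS v); rewrite (negbTE vS).
- by move=> s ->.
- move=> c; apply/fixsP/forallP => H v.
  + by case: ifP => // _; rewrite H.
  + have h1 := eqP (H v); have h2 := eqP (H (g v)); rewrite gK in h2.
    case: ifP h1 h2 => vS; case: ifP => gvS h1 h2.
    * by rewrite hS2.
    * by rewrite h2.
    * by rewrite h1.
    * by move: (hS v); rewrite vS gvS.
Qed.

End Generic2.

Lemma card_union5 (T : finType) (X A B C D : {set T}) :
  (forall x, x \in A -> x \in B -> x \in X) ->
  (forall x, x \in A -> x \in C -> x \in X) ->
  (forall x, x \in A -> x \in D -> x \in X) ->
  (forall x, x \in B -> x \in C -> x \in X) ->
  (forall x, x \in B -> x \in D -> x \in X) ->
  (forall x, x \in C -> x \in D -> x \in X) ->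
  #|X :|: A :|: B :|: C :|: D| = #|X| + #|A :\: X| + #|B :\: X| + #|C :\: X| + #|D :\: X|.
Proof.
move=> hAB hAC hAD hBC hBD hCD.
have -> : X :|: A :|: B :|: C :|: D = X :|: (A :\: X) :|: (B :\: X) :|: (C :\: X) :|: (D :\: X).
  by apply/setP => x; rewrite !inE; case: (x \in X).
have disj : forall (P Q : {set T}), P :&: Q = set0 -> #|P :|: Q| = #|P| + #|Q|.
  by move=> P Q h; rewrite cardsU h cards0 subn0.
rewrite !disj //; apply/setP => x; rewrite !inE;
  move: (hAB x) (hAC x) (hAD x) (hBC x) (hBD x) (hCD x);
  case: (x \in X); case: (x \in A); case: (x \in B); case: (x \in C); case: (x \in D) => //=;
  intros; solve [ match goal with H : is_true true -> is_true true -> is_true false |- _ =>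
     discriminate (H isT isT) end ].
Qed.

Section Grid.
Variable n : nat.
Hypothesis Hn : 2 < n.
Local Notation V := ('I_n * 'I_n)%type.
Local Notation e := (@grid_adj n).

Definition r1 (x : V) : nat := x.1.
Definition r2 (x : V) : nat := x.2.

Lemma adjE (x y : V) : e x y = (((r1 x == r1 y) && (((r2 x).+1 == r2 y) || ((r2 y).+1 == r2 x))) || ((((r1 x).+1 == r1 y) || ((r1 y).+1 == r1 x)) && (r2 x == r2 y))).
Proof. by []. Qed.

Lemma vtx_eq (x y : V) : r1 x = r1 y /\ r2 x = r2 y -> x = y.
Proof. by case=> h1 h2; apply/eqP; rewrite /eq_op /= -!val_eqE /= -/(r1 x) -/(r2 x) h1 h2 !eqxx. Qed.

Lemma vtx_val (x y : V) : x = y -> r1 x = r1 y /\ r2 x = r2 y.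
Proof. by move=> ->. Qed.

Definition F (a b t : bool) (v : V) : V :=
  let w := if t then (v.2, v.1) else v in
  (if a then rev_ord w.1 else w.1, if b then rev_ord w.2 else w.2).

Lemma bndV (x : V) : r1 x < n /\ r2 x < n.
Proof. by rewrite /r1 /r2 !ltn_ord. Qed.
Ltac bnd x := have := bndV x; case.

Lemma r1F a b t x : r1 (F a b t x) = if a then n - (if t then r2 x else r1 x).+1 else (if t then r2 x else r1 x).
Proof. by case: a; case: t. Qed.
Lemma r2F a b t x : r2 (F a b t x) = if b then n - (if t then r1 x else r2 x).+1 else (if t then r1 x else r2 x).
Proof. by case: b; case: t. Qed.

Lemma F_inj a b t : injective (F a b t).
Proof.
move=> x y /vtx_val; rewrite !r1F !r2F => h; apply: vtx_eq; move: h; bnd x; bnd y.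
by case: a; case: b; case: t => /=; lia.
Qed.

Definition Fp a b t : {perm V} := perm (@F_inj a b t).

Lemma FpE a b t v : Fp a b t v = F a b t v.
Proof. by rewrite permE. Qed.

Definition aut (a : {perm V}) := is_graph_aut e a.

Lemma autP (a : {perm V}) : aut a -> forall x y, e (a x) (a y) = e x y.
Proof. by move=> /forallP H x y; have /forallP/(_ y)/eqP := H x. Qed.

Lemma autI (a : {perm V}) : (forall x y, e (a x) (a y) = e x y) -> aut a.
Proof. by move=> H; apply/forallP => x; apply/forallP => y; rewrite H. Qed.

Lemma F_aut a b t : aut (Fp a b t).
Proof.
apply: autI => x y; rewrite !FpE !adjE !r1F !r2F.
have := bndV x; have := bndV y.
by case: a; case: b; case: t => /= ? ?; apply/idP/idP; lia.
Qed.

Lemma aut1 : aut 1.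
Proof. by apply: autI => x y; rewrite !perm1. Qed.

Lemma autM (a b : {perm V}) : aut a -> aut b -> aut (a * b).
Proof. by move=> ha hb; apply: autI => x y; rewrite !permM (autP hb) (autP ha). Qed.

Lemma autV (a : {perm V}) : aut a -> aut a^-1.
Proof. by move=> ha; apply: autI => x y; rewrite -(autP ha) !permKV. Qed.

Lemma exV (i j : nat) : i < n -> j < n -> exists w : V, r1 w = i /\ r2 w = j.
Proof. by move=> hi hj; exists (Ordinal hi, Ordinal hj). Qed.

Lemma rigid (b : {perm V}) : aut b ->
  (forall v : V, r1 v + r2 v <= 1 -> b v = v) -> forall v, b v = v.
Proof.
move=> hb h0.
suff H : forall s (v : V), r1 v + r2 v <= s -> b v = v.
  by move=> v; apply: (H (r1 v + r2 v)).
elim=> [|s IH] v hv; first by apply: h0; lia.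
case: (leqP (r1 v + r2 v) s) => hs; first exact: IH.
case: (leqP s 0) => s0; first by apply: h0; lia.
have inter : forall x : V, r1 x + r2 x = s.+1 -> 0 < r1 x -> 0 < r2 x -> b x = x.
  move=> x hx h1 h2; bnd x => b2 b1.
  have [y1 [y11 y12]] := exV (i := (r1 x).-1) (j := r2 x) ltac:(lia) ltac:(lia).
  have [y2 [y21 y22]] := exV (i := r1 x) (j := (r2 x).-1) ltac:(lia) ltac:(lia).
  have [z [z1 z2]] := exV (i := (r1 x).-1) (j := (r2 x).-1) ltac:(lia) ltac:(lia).
  have e1 : b y1 = y1 by apply: IH; lia.
  have e2 : b y2 = y2 by apply: IH; lia.
  have ez : b z = z by apply: IH; lia.
  have a1 := autP hb x y1; rewrite e1 in a1.
  have a2 := autP hb x y2; rewrite e2 in a2.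
  have ex1 : e x y1 by rewrite adjE; lia.
  have ex2 : e x y2 by rewrite adjE; lia.
  rewrite ex1 adjE in a1; rewrite ex2 adjE in a2.
  have : (r1 (b x) = r1 x /\ r2 (b x) = r2 x) \/
         (r1 (b x) = r1 z /\ r2 (b x) = r2 z) by lia.
  case=> [hh|hh]; first exact: vtx_eq.
  have : b x = b z by rewrite ez; apply: vtx_eq.
  by move/perm_inj => /vtx_val; lia.
have [x10|x10] := posnP (r1 v); have [x20|x20] := posnP (r2 v).
- lia.
-
  bnd v => b2 b1.
  have [y [y1 y2]] := exV (i := 0) (j := s) ltac:(lia) ltac:(lia).
  have [z [z1 z2]] := exV (i := 0) (j := s.-1) ltac:(lia) ltac:(lia).
  have ey : b y = y by apply: IH; lia.
  have ez : b z = z by apply: IH; lia.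
  have a1 := autP hb v y; rewrite ey in a1.
  have ex1 : e v y by rewrite adjE; lia.
  rewrite ex1 adjE in a1.
  set w := b v in a1 *.
  bnd w => c2 c1.
  have : (r1 w = r1 v /\ r2 w = r2 v) \/
         (r1 w = r1 z /\ r2 w = r2 z) \/
         (r1 w = 1 /\ r2 w = s) by lia.
  case=> [hh|[hh|hh]]; first exact: vtx_eq.
  + have : b v = b z by rewrite ez; apply: vtx_eq.
    by move/perm_inj => /vtx_val; lia.
  + have bw : b w = w by apply: inter; lia.
    have : b v = b w by rewrite bw.
    by move/perm_inj => /vtx_val; lia.
- bnd v => b2 b1.
  have [y [y1 y2]] := exV (i := s) (j := 0) ltac:(lia) ltac:(lia).
  have [z [z1 z2]] := exV (i := s.-1) (j := 0) ltac:(lia) ltac:(lia).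
  have ey : b y = y by apply: IH; lia.
  have ez : b z = z by apply: IH; lia.
  have a1 := autP hb v y; rewrite ey in a1.
  have ex1 : e v y by rewrite adjE; lia.
  rewrite ex1 adjE in a1.
  set w := b v in a1 *.
  bnd w => c2 c1.
  have : (r1 w = r1 v /\ r2 w = r2 v) \/
         (r1 w = r1 z /\ r2 w = r2 z) \/
         (r1 w = s /\ r2 w = 1) by lia.
  case=> [hh|[hh|hh]]; first exact: vtx_eq.
  + have : b v = b z by rewrite ez; apply: vtx_eq.
    by move/perm_inj => /vtx_val; lia.
  + have bw : b w = w by apply: inter; lia.
    have : b v = b w by rewrite bw.
    by move/perm_inj => /vtx_val; lia.
- by apply: inter; lia.
Qed.


Lemma many3 (v : V) : ~~ [&& ((r1 v == 0) || (r1 v == n.-1)) & ((r2 v == 0) || (r2 v == n.-1))] ->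
  exists w1 w2 w3 : V, [/\ e v w1, e v w2, e v w3 & [/\ w1 != w2, w1 != w3 & w2 != w3]].
Proof.
move=> hv; bnd v => b1 b2.
have [h|h] : (0 < r1 v < n.-1) \/ (0 < r2 v < n.-1) by lia.
- have [w1 [p1 q1]] := exV (i := (r1 v).-1) (j := r2 v) ltac:(lia) ltac:(lia).
  have [w2 [p2 q2]] := exV (i := (r1 v).+1) (j := r2 v) ltac:(lia) ltac:(lia).
  have [z|nz] := posnP (r2 v).
  + have [w3 [p3 q3]] := exV (i := r1 v) (j := (r2 v).+1) ltac:(lia) ltac:(lia).
    exists w1, w2, w3; split; try (rewrite adjE; lia).
    by split; apply/eqP => /vtx_val; lia.
  + have [w3 [p3 q3]] := exV (i := r1 v) (j := (r2 v).-1) ltac:(lia) ltac:(lia).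
    exists w1, w2, w3; split; try (rewrite adjE; lia).
    by split; apply/eqP => /vtx_val; lia.
- have [w1 [p1 q1]] := exV (i := r1 v) (j := (r2 v).-1) ltac:(lia) ltac:(lia).
  have [w2 [p2 q2]] := exV (i := r1 v) (j := (r2 v).+1) ltac:(lia) ltac:(lia).
  have [z|nz] := posnP (r1 v).
  + have [w3 [p3 q3]] := exV (i := (r1 v).+1) (j := r2 v) ltac:(lia) ltac:(lia).
    exists w1, w2, w3; split; try (rewrite adjE; lia).
    by split; apply/eqP => /vtx_val; lia.
  + have [w3 [p3 q3]] := exV (i := (r1 v).-1) (j := r2 v) ltac:(lia) ltac:(lia).
    exists w1, w2, w3; split; try (rewrite adjE; lia).
    by split; apply/eqP => /vtx_val; lia.
Qed.

Lemma corner_few (o : V) : r1 o = 0 -> r2 o = 0 -> forall w1 w2 w3,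
  e o w1 -> e o w2 -> e o w3 -> w1 = w2 \/ w1 = w3 \/ w2 = w3.
Proof.
move=> h1 h2 w1 w2 w3; rewrite !adjE => a1 a2 a3.
have : (r1 w1 = r1 w2 /\ r2 w1 = r2 w2) \/ (r1 w1 = r1 w3 /\ r2 w1 = r2 w3)
   \/ (r1 w2 = r1 w3 /\ r2 w2 = r2 w3) by lia.
by case=> [h|[h|h]]; [left|right;left|right;right]; apply: vtx_eq.
Qed.

Lemma corner (a : {perm V}) (o : V) : aut a -> r1 o = 0 -> r2 o = 0 ->
  [&& ((r1 (a o) == 0) || (r1 (a o) == n.-1)) & ((r2 (a o) == 0) || (r2 (a o) == n.-1))].
Proof.
move=> ha h1 h2; apply/negPn/negP => /many3 [w1 [w2 [w3 [a1 a2 a3 [d12 d13 d23]]]]].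
have u i : e (a o) i -> e o ((a^-1)%g i) by rewrite -(autP ha o) permKV.
have := corner_few h1 h2 (u _ a1) (u _ a2) (u _ a3).
case=> [h|[h|h]]; have := congr1 a h; rewrite !permKV => hh.
- by rewrite hh eqxx in d12.
- by rewrite hh eqxx in d13.
- by rewrite hh eqxx in d23.
Qed.

Lemma agree (a g : {perm V}) : aut a -> aut g ->
  (forall v : V, r1 v + r2 v <= 1 -> a v = g v) -> a = g.
Proof.
move=> ha hg H; apply/permP => v.
have h : forall w, (a * g^-1)%g w = w.
  apply: rigid; first exact: (autM ha (autV hg)).
  by move=> w hw; rewrite permM H // permK.
by have := h v; rewrite permM => h'; rewrite -[LHS](permKV g) h'.
Qed.

Lemma aut_char (a : {perm V}) : aut a -> exists a' b' t', a = Fp a' b' t'.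
Proof.
move=> ha.
have [o00 [x1 x2]] := exV (i := 0) (j := 0) ltac:(lia) ltac:(lia).
have [o01 [y1 y2]] := exV (i := 0) (j := 1) ltac:(lia) ltac:(lia).
have [o10 [z1 z2]] := exV (i := 1) (j := 0) ltac:(lia) ltac:(lia).
have hc := corner ha x1 x2.
set c := a o00 in hc.
have ep : e c (a o01) by rewrite /c (autP ha) adjE; lia.
have eq : e c (a o10) by rewrite /c (autP ha) adjE; lia.
have pq : ~ (r1 (a o01) = r1 (a o10) /\ r2 (a o01) = r2 (a o10)).
  by move/vtx_eq/perm_inj/vtx_val; lia.
set p := a o01 in ep pq; set q := a o10 in eq pq.
move: ep eq; rewrite !adjE => ep eq.
have := bndV c; have := bndV p; have := bndV q => bq bp bc.
exists (r1 c != 0), (r2 c != 0), (r1 p != r1 c).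
apply: agree => //; first exact: F_aut.
move=> v hv.
have : (r1 v = 0 /\ r2 v = 0) \/ (r1 v = 0 /\ r2 v = 1) \/ (r1 v = 1 /\ r2 v = 0) by lia.
case=> [h|[h|h]].
- have -> : v = o00 by apply: vtx_eq; lia.
  apply: vtx_eq; rewrite FpE r1F r2F -/c.
  by case E1: (r1 c == 0); case E2: (r2 c == 0); case E3 : (r1 p == r1 c) => /=; lia.
- have -> : v = o01 by apply: vtx_eq; lia.
  apply: vtx_eq; rewrite FpE r1F r2F -/p.
  by case E1: (r1 c == 0); case E2: (r2 c == 0); case E3 : (r1 p == r1 c) => /=; lia.
- have -> : v = o10 by apply: vtx_eq; lia.
  apply: vtx_eq; rewrite FpE r1F r2F -/q.
  by case E1: (r1 c == 0); case E2: (r2 c == 0); case E3 : (r1 p == r1 c) => /=; lia.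
Qed.


Lemma Fp1 : Fp false false false = 1%g.
Proof. by apply/permP => v; rewrite FpE perm1; case: v. Qed.

Lemma Fp_inj a b t a' b' t' : Fp a b t = Fp a' b' t' -> (a, b, t) = (a', b', t').
Proof.
move=> E.
have [o00 [x1 x2]] := exV (i := 0) (j := 0) ltac:(lia) ltac:(lia).
have [o01 [y1 y2]] := exV (i := 0) (j := 1) ltac:(lia) ltac:(lia).
have := congr1 (fun g : {perm V} => g o00) E; have := congr1 (fun g : {perm V} => g o01) E.
move=> /= /vtx_val + /vtx_val; rewrite !FpE !r1F !r2F x1 x2 y1 y2.
clear E; by case: a; case: b; case: t; case: a'; case: b'; case: t' => //=; lia.
Qed.

Variable k : nat.

Local Notation fH := (F true false false).
Local Notation fV := (F false true false).
Local Notation fR2 := (F true true false).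
Local Notation fT := (F false false true).
Local Notation fT' := (F true true true).

Lemma Fcomp a b t a1 b1 t1 a2 b2 t2 :
  (forall v, r1 (F a b t v) = r1 (F a1 b1 t1 (F a2 b2 t2 v)) /\ r2 (F a b t v) = r2 (F a1 b1 t1 (F a2 b2 t2 v))) ->
  forall v, F a b t v = F a1 b1 t1 (F a2 b2 t2 v).
Proof. by move=> h v; apply: vtx_eq; apply: h. Qed.

Ltac fcomp := apply: Fcomp => v; rewrite !r1F !r2F /=; have := bndV v; lia.

Definition Ucol := fixs k fR2 :|: fixs k fH :|: fixs k fV :|: fixs k fT :|: fixs k fT'.

Lemma D_E : [set c : coloring V k | distinguishing e c] = ~: Ucol.
Proof.
apply/setP => c; rewrite in_setC in_set.
have toF a b t : [forall v, c (Fp a b t v) == c v] = (c \in fixs k (F a b t)).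
  by rewrite inE; apply: eq_forallb => v; rewrite FpE.
apply/idP/idP.
- move=> /forallP hd.
  have key a b t : c \in fixs k (F a b t) -> (a, b, t) = (false, false, false).
    move=> hf; apply: Fp_inj; rewrite Fp1; apply/eqP.
    by have ha := F_aut a b t; rewrite /aut in ha; have := hd (Fp a b t); rewrite ha toF hf.
  by apply/negP; rewrite /Ucol !in_setU => /orP [/orP [/orP [/orP [] | ] | ] | ] /key.
- move=> hU; apply/forallP => p; apply/implyP => /andP [hp hf].
  have [a [b [t ep]]] := aut_char hp; subst p.
  move: hf hU; rewrite toF /Ucol !in_setU; clear hp.
  case: a; case: b; case: t => hf; rewrite ?hf ?orbT //.
  + have -> // : c \in fixs k fR2 by apply: (fix_comp (g1 := F true false true) (g2 := F true false true)) => //; fcomp.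
  + have -> // : c \in fixs k fR2 by apply: (fix_comp (g1 := F false true true) (g2 := F false true true)) => //; fcomp.
  + by rewrite Fp1 eqxx.
Qed.


Definition AutS := [set a : {perm V} | is_graph_aut e a].

Lemma card_AutS : #|AutS| = 8.
Proof.
have -> : AutS = [set Fp x.1.1 x.1.2 x.2 | x in [set: bool * bool * bool]].
  apply/setP => a; rewrite inE; apply/idP/imsetP.
  - by move/aut_char => [a' [b' [t' ->]]]; exists (a', b', t').
  - by move=> [x _ ->]; apply: F_aut.
rewrite card_imset ?cardsT ?card_prod ?card_bool //.
by move=> [[a b] t] [[a' b'] t'] /Fp_inj [-> -> ->].
Qed.

Local Notation eqv := (@equiv_colorings V e k).

Lemma equivP (c1 c2 : coloring V k) :
  reflect (exists2 a : {perm V}, aut a & forall v, c1 v = c2 (a v)) (eqv c1 c2).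
Proof.
apply: (iffP existsP) => [[a /andP [ha /forallP h]] | [a ha h]].
- by exists a => // v; apply/eqP.
- by exists a; rewrite /aut in ha; rewrite ha; apply/forallP => v; rewrite h.
Qed.

Lemma eqv_refl c : eqv c c.
Proof. by apply/equivP; exists 1%g; [exact: aut1 | move=> v; rewrite perm1]. Qed.

Lemma eqv_sym c1 c2 : eqv c1 c2 -> eqv c2 c1.
Proof.
move/equivP => [a ha h]; apply/equivP; exists (a^-1)%g; first exact: autV.
by move=> v; rewrite h permKV.
Qed.

Lemma eqv_trans c1 c2 c3 : eqv c1 c2 -> eqv c2 c3 -> eqv c1 c3.
Proof.
move/equivP => [a ha h]; move/equivP => [b hb h'].
by apply/equivP; exists (a * b)%g; [exact: autM | move=> v; rewrite permM h h'].
Qed.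

Lemma distP (c : coloring V k) :
  reflect (forall p : {perm V}, aut p -> (forall v, c (p v) = c v) -> p = 1%g) (distinguishing e c).
Proof.
apply: (iffP forallP) => H p.
- move=> hp hf; apply/eqP; have := H p; rewrite /aut in hp; rewrite hp /=.
  by move/implyP; apply; apply/forallP => v; rewrite hf.
- apply/implyP => /andP [hp /forallP hf]; apply/eqP; apply: H => // v; exact/eqP.
Qed.

Lemma eqv_dist c1 c2 : eqv c1 c2 -> distinguishing e c1 -> distinguishing e c2.
Proof.
move/equivP => [a ha h] /distP d1; apply/distP => p hp hf.
have hq : (a * p * a^-1)%g = 1%g.
  apply: d1; first exact: (autM (autM ha hp) (autV ha)).
  by move=> w; rewrite !permM h permKV hf -h.
have H : forall v, (a * p * a^-1)%g v = v by move=> v; rewrite hq perm1.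
 apply/permP => w; rewrite perm1.
have := H (a^-1 w)%g; rewrite !permM permKV => /(congr1 a); by rewrite !permKV.
Qed.

Lemma class_card (x : coloring V k) : distinguishing e x -> #|[set y | eqv x y]| = 8.
Proof.
move=> /distP dx.
have -> : [set y | eqv x y] = [set [ffun w => x ((a : {perm V})^-1%g w)] | a in AutS].
  apply/setP => y; rewrite inE; apply/equivP/imsetP.
  - move=> [a ha h]; exists a; first by rewrite inE.
    by apply/ffunP => w; rewrite ffunE h permKV.
  - move=> [a]; rewrite inE => ha ->; exists a => // v; by rewrite ffunE permK.
rewrite card_in_imset ?card_AutS // => a b; rewrite !inE => ha hb E.
have hp : (b * a^-1)%g = 1%g.
  apply: dx; first exact: (autM hb (autV ha)).
  move=> w; rewrite permM.
  by have := congr1 (fun f : coloring V k => f (b w)) E; rewrite !ffunE permK => ->.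
have H : forall v, (b * a^-1)%g v = v by move=> v; rewrite hp perm1.
 apply/permP => w; have := H w; rewrite permM => /(congr1 a); by rewrite !permKV.
Qed.

Lemma Phi_card : Phi e k * 8 = #|[set c : coloring V k | distinguishing e c]|.
Proof.
set D := [set c : coloring V k | distinguishing e c].
have eqR : {in D & &, equivalence_rel eqv}.
  move=> x y z _ _ _; split; first exact: eqv_refl.
  move=> hxy; apply/idP/idP => h; first exact: eqv_trans (eqv_sym hxy) h.
  exact: eqv_trans hxy h.
have hP := equivalence_partitionP eqR.
have EP : [set [set c2 : coloring V k | eqv c1 c2] | c1 in D] = equivalence_partition eqv D.
  rewrite /equivalence_partition; apply: eq_in_imset => c1 hc1; apply/setP => c2.
  have d1 : distinguishing e c1 by rewrite inE in hc1.
  rewrite !inE; case h: (eqv c1 c2); rewrite ?andbF ?andbT //.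
  by rewrite (eqv_dist h d1).
rewrite /Phi -/D EP (card_partition hP).
rewrite -sum_nat_const; apply: eq_bigr => A /imsetP [x hx ->].
have <- : [set y | eqv x y] = [set y in D | eqv x y].
  have d1 : distinguishing e x by rewrite inE in hx.
  apply/setP => y; rewrite !inE; case h: (eqv x y); rewrite ?andbF ?andbT //.
  by rewrite (eqv_dist h d1).
by rewrite class_card //; rewrite inE in hx.
Qed.


Lemma par : exists q b, [/\ n = q * 2 + b, b <= 1, uphalf n = q + b,
  uphalf n.+1 = q + 1 & (odd n : nat) = b].
Proof.
exists n./2, (odd n); split => //.
- by have := odd_double_half n; rewrite -muln2; lia.
- by case: (odd n).
- by rewrite uphalf_half addnC.
- by rewrite addn1.
Qed.

Definition Aset := [set i : 'I_n | i <= n - i.+1].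
Definition Cset := [set i : 'I_n | i == n - i.+1 :> nat].

Lemma card_C : #|Cset| = odd n.
Proof.
have [q [b [hn hb _ _ ho]]] := par.
case hodd: (odd n) ho => /= ho.
- have hq : q < n by lia.
  have -> : Cset = [set Ordinal hq].
    by apply/setP => i; rewrite !inE -val_eqE /=; apply/idP/idP; lia.
  by rewrite cards1.
- have -> : Cset = set0.
    by apply/setP => i; rewrite !inE; apply/negbTE; have := ltn_ord i; lia.
  by rewrite cards0.
Qed.

Lemma card_A : #|Aset| = uphalf n.
Proof.
have := @half_card _ setT Aset (@rev_ord n) (@rev_ordK n) (fun _ _ => in_setT _) (subsetT _).
have -> : [set v in setT | rev_ord v == v] = Cset.
  by apply/setP => i; rewrite !inE -val_eqE /= eq_sym.
rewrite card_C cardsT card_ord.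
have h1 : forall v : 'I_n, v \in setT -> (v \in Aset) || (rev_ord v \in Aset).
  by move=> v _; rewrite !inE /=; have := ltn_ord v; lia.
have h2 : forall v : 'I_n, v \in Aset -> rev_ord v \in Aset -> rev_ord v = v.
  by move=> v; rewrite !inE /= => ? ?; apply: val_inj => /=; have := ltn_ord v; lia.
move/(_ h1 h2).
have [q [b [hn hb hu _ ho]]] := par.
rewrite hu ho; lia.
Qed.


Definition S_R2 := [set v : V | (r1 v < n - (r1 v).+1) || ((r1 v == n - (r1 v).+1) && (r2 v <= n - (r2 v).+1))].
Definition S_H := [set v : V | r1 v <= n - (r1 v).+1].
Definition S_V := [set v : V | r2 v <= n - (r2 v).+1].
Definition S_T := [set v : V | r2 v <= r1 v].
Definition S_T' := [set v : V | r1 v + r2 v < n].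
Definition S_V1 := [set v : V | (r1 v <= n - (r1 v).+1) && (r2 v <= n - (r2 v).+1)].
Definition S_V2 := [set v : V | (r2 v <= r1 v) && (r1 v + r2 v < n)].

Ltac vt := let v := fresh "v" in move=> v; apply: vtx_eq; repeat rewrite ?r1F ?r2F /=; have := bndV v; lia.
Ltac ht := let v := fresh "v" in move=> v; rewrite !inE; repeat rewrite ?r1F ?r2F /=; have := bndV v; lia.
Ltac ht2 := let v := fresh "v" in let h1 := fresh "h" in let h2 := fresh "h" in
  move=> v; rewrite !inE => h1 h2; apply: vtx_eq; move: h1 h2; repeat rewrite ?r1F ?r2F /=; have := bndV v; lia.

Lemma halfV (g : V -> V) (S : {set V}) : involutive g -> (forall v, (v \in S) || (g v \in S)) ->
  (forall v, v \in S -> g v \in S -> g v = v) -> #|S| * 2 = n * n + #|[set v | g v == v]|.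
Proof.
move=> gK h1 h2.
have E : [set v in setT | g v == v] = [set v | g v == v] by apply/setP => v; rewrite !inE.
rewrite -E.
have := @half_card _ setT S g gK (fun _ _ => in_setT _) (subsetT _) (fun v _ => h1 v) h2.
by rewrite cardsT card_prod card_ord.
Qed.

Lemma card_SR2 : #|S_R2| = uphalf (n ^ 2).
Proof.
have := @halfV (F true true false) S_R2 ltac:(vt) ltac:(ht) ltac:(ht2).
have -> : [set v | F true true false v == v] = setX Cset Cset.
  apply/setP => [[i j]]; rewrite !inE /= xpair_eqE -!val_eqE /=.
  by apply/idP/idP; lia.
rewrite cardsX card_C.
have U := uphalfK (n ^ 2); rewrite oddX orFb -muln2 -mulnn in U.
have [q [b [hn hb _ _ ho]]] := par.
rewrite ho in U * => h.
suff : #|S_R2| * 2 = uphalf (n ^ 2) * 2 by lia.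
rewrite U h; nia.
Qed.

Lemma card_SH : #|S_H| = n * uphalf n.
Proof.
have := @halfV (F true false false) S_H ltac:(vt) ltac:(ht) ltac:(ht2).
have -> : [set v | F true false false v == v] = setX Cset setT.
  apply/setP => [[i j]]; rewrite !inE /= xpair_eqE -!val_eqE /= eqxx andbT.
  by apply/idP/idP; lia.
rewrite cardsX card_C cardsT card_ord.
have [q [b [hn hb hu _ ho]]] := par.
rewrite ho hu => h.
suff : #|S_H| * 2 = n * (q + b) * 2 by lia.
rewrite h; nia.
Qed.

Lemma card_SV : #|S_V| = n * uphalf n.
Proof.
have := @halfV (F false true false) S_V ltac:(vt) ltac:(ht) ltac:(ht2).
have -> : [set v | F false true false v == v] = setX setT Cset.
  apply/setP => [[i j]]; rewrite !inE /= xpair_eqE -!val_eqE /= eqxx.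
  by apply/idP/idP; lia.
rewrite cardsX card_C cardsT card_ord.
have [q [b [hn hb hu _ ho]]] := par.
rewrite ho hu => h.
suff : #|S_V| * 2 = n * (q + b) * 2 by lia.
rewrite h; nia.
Qed.

Lemma card_ST2 : #|S_T| * 2 = n * n.+1.
Proof.
have := @halfV (F false false true) S_T ltac:(vt) ltac:(ht) ltac:(ht2).
have -> : [set v | F false false true v == v] = [set (i, i) | i in 'I_n].
  apply/setP => [[i j]]; rewrite !inE /= xpair_eqE; apply/idP/imsetP.
  - by move=> /= /andP [/eqP -> _]; exists i.
  - by move=> [x _ [-> ->]] /=; rewrite eqxx.
rewrite card_imset; last by move=> x y [].
rewrite card_ord => h.
by rewrite h; lia.
Qed.

Lemma card_ST : #|S_T| = (n * n.+1) %/ 2.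
Proof. by rewrite -card_ST2 mulnK. Qed.

Lemma card_ST' : #|S_T'| = (n * n.+1) %/ 2.
Proof.
have := @halfV (F true true true) S_T' ltac:(vt) ltac:(ht) ltac:(ht2).
have -> : [set v | F true true true v == v] = [set (rev_ord j, j) | j in 'I_n].
  apply/setP => [[i j]]; rewrite !inE /= xpair_eqE; apply/idP/imsetP.
  - by move=> /= /andP [/eqP <- _]; exists j.
  - by move=> [x _ [-> ->]] /=; rewrite rev_ordK !eqxx.
rewrite card_imset; last by move=> x y [].
rewrite card_ord => h.
by rewrite (_ : n * n.+1 = #|S_T'| * 2) ?mulnK // h; lia.
Qed.

Lemma card_SV1 : #|S_V1| = uphalf n ^ 2.
Proof.
have -> : S_V1 = setX Aset Aset by apply/setP => [[i j]]; rewrite !inE.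
by rewrite cardsX card_A mulnn.
Qed.

Lemma card_SV2 : #|S_V2| = uphalf n * uphalf n.+1.
Proof.
have sub : S_V2 \subset S_T by apply/subsetP => v; rewrite !inE => /andP [].
have := @half_card _ S_T S_V2 (F true true true) ltac:(vt) ltac:(ht) sub ltac:(ht) ltac:(ht2).
have -> : [set v in S_T | F true true true v == v] = [set (rev_ord j, j) | j in Aset].
  apply/setP => [[i j]]; rewrite !inE /= xpair_eqE; apply/idP/imsetP.
  - move=> /andP [h /andP [/eqP e1 _]]; exists j; last by rewrite -e1.
    by rewrite inE; move: h; rewrite /r1 /r2 /= -e1 /=.
  - move=> [x]; rewrite inE => hx [-> ->]; rewrite rev_ordK !eqxx /r1 /r2 /= andbT.
    by have := ltn_ord x; lia.
rewrite card_in_imset; last by move=> x y _ _ [].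
rewrite card_A.
have h2 := card_ST2.
have [q [b [hn hb hu hu1 ho]]] := par.
rewrite hu hu1 => h.
suff : #|S_V2| * 4 = (q + b) * (q + 1) * 4 by lia.
nia.
Qed.


Lemma cX : #|fixs k (F true true false)| = k ^ uphalf (n ^ 2).
Proof. by rewrite (@fix_card1 _ k (F true true false) S_R2 ltac:(vt) ltac:(ht) ltac:(ht2)) card_SR2. Qed.
Lemma cH : #|fixs k (F true false false)| = k ^ (n * uphalf n).
Proof. by rewrite (@fix_card1 _ k (F true false false) S_H ltac:(vt) ltac:(ht) ltac:(ht2)) card_SH. Qed.
Lemma cV : #|fixs k (F false true false)| = k ^ (n * uphalf n).
Proof. by rewrite (@fix_card1 _ k (F false true false) S_V ltac:(vt) ltac:(ht) ltac:(ht2)) card_SV. Qed.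
Lemma cT : #|fixs k (F false false true)| = k ^ ((n * n.+1) %/ 2).
Proof. by rewrite (@fix_card1 _ k (F false false true) S_T ltac:(vt) ltac:(ht) ltac:(ht2)) card_ST. Qed.
Lemma cT' : #|fixs k (F true true true)| = k ^ ((n * n.+1) %/ 2).
Proof. by rewrite (@fix_card1 _ k (F true true true) S_T' ltac:(vt) ltac:(ht) ltac:(ht2)) card_ST'. Qed.

Definition rho1 (v : V) : V :=
  if r1 v <= n - (r1 v).+1 then (if r2 v <= n - (r2 v).+1 then v else fV v)
  else (if r2 v <= n - (r2 v).+1 then fH v else fR2 v).

Definition rho2 (v : V) : V :=
  if r1 v + r2 v < n then (if r2 v <= r1 v then v else fT v)
  else (if r2 v <= r1 v then fT' v else fR2 v).

Ltac rt := let v := fresh "v" in move=> v; rewrite /rho1 /rho2; repeat rewrite ?r1F ?r2F /=;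
  (repeat case: ifP => ?); apply: vtx_eq; repeat rewrite ?r1F ?r2F /=; have := bndV v; lia.

Lemma rho1_H v : rho1 (fH v) = rho1 v. Proof. move: v; rt. Qed.
Lemma rho1_R v : rho1 (fR2 v) = rho1 v. Proof. move: v; rt. Qed.
Lemma rho2_T v : rho2 (fT v) = rho2 v. Proof. move: v; rt. Qed.
Lemma rho2_R v : rho2 (fR2 v) = rho2 v. Proof. move: v; rt. Qed.


Lemma cV1 : #|fixs k fH :&: fixs k fR2| = k ^ (uphalf n ^ 2).
Proof.
rewrite (@card_retract _ k _ S_V1 rho1) ?card_SV1 //.
- move=> v; rewrite /rho1; repeat rewrite ?r1F ?r2F /=; (repeat case: ifP => ?);
  rewrite inE; repeat rewrite ?r1F ?r2F /=; have := bndV v; lia.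
- by move=> s; rewrite inE => /andP [h1 h2]; rewrite /rho1 h1 h2.
- move=> c; rewrite inE; apply/andP/forallP.
  + move=> [/fixsP hH /fixsP hR] v.
    have eV : forall w, fV w = fH (fR2 w) by vt.
    have hV : forall w, c (fV w) = c w by move=> w; rewrite eV hH hR.
    by rewrite /rho1; case: ifP => _; case: ifP => _; rewrite ?hH ?hV ?hR ?eqxx.
  + move=> H; split; apply/fixsP => v.
    * by rewrite (eqP (H v)) (eqP (H (fH v))) rho1_H.
    * by rewrite (eqP (H v)) (eqP (H (fR2 v))) rho1_R.
Qed.

Lemma cV2 : #|fixs k fT :&: fixs k fR2| = k ^ (uphalf n * uphalf n.+1).
Proof.
rewrite (@card_retract _ k _ S_V2 rho2) ?card_SV2 //.
- move=> v; rewrite /rho2; repeat rewrite ?r1F ?r2F /=; (repeat case: ifP => ?);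
  rewrite inE; repeat rewrite ?r1F ?r2F /=; have := bndV v; lia.
- by move=> s; rewrite inE => /andP [h1 h2]; rewrite /rho2 h1 h2.
- move=> c; rewrite inE; apply/andP/forallP.
  + move=> [/fixsP hT /fixsP hR] v.
    have eT' : forall w, fT' w = fT (fR2 w) by vt.
    have hT' : forall w, c (fT' w) = c w by move=> w; rewrite eT' hT hR.
    by rewrite /rho2; case: ifP => _; case: ifP => _; rewrite ?hT ?hT' ?hR ?eqxx.
  + move=> H; split; apply/fixsP => v.
    * by rewrite (eqP (H v)) (eqP (H (fT v))) rho2_T.
    * by rewrite (eqP (H v)) (eqP (H (fR2 v))) rho2_R.
Qed.

Lemma pair1 (g1 g2 : V -> V) c : (forall v, fR2 v = g1 (g2 v)) ->
  c \in fixs k g1 -> c \in fixs k g2 -> c \in fixs k fR2.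
Proof. by move=> E /fixsP h1 /fixsP h2; apply/fixsP => v; rewrite E h1 h2. Qed.

Lemma pair2 (g1 g2 : V -> V) c : (forall v, fR2 v = g1 (g2 (g1 (g2 v)))) ->
  c \in fixs k g1 -> c \in fixs k g2 -> c \in fixs k fR2.
Proof. by move=> E /fixsP h1 /fixsP h2; apply/fixsP => v; rewrite E h1 h2 h1 h2. Qed.

Lemma cV1' : fixs k fV :&: fixs k fR2 = fixs k fH :&: fixs k fR2.
Proof.
apply/setP => c; rewrite !in_setI; apply/andP/andP => [[/fixsP h1 /fixsP h2]|[/fixsP h1 /fixsP h2]];
  split; apply/fixsP => //.
- have E : forall w, fH w = fV (fR2 w) by vt.
  by move=> v; rewrite E h1 h2.
- have E : forall w, fV w = fH (fR2 w) by vt.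
  by move=> v; rewrite E h1 h2.
Qed.

Lemma cV2' : fixs k fT' :&: fixs k fR2 = fixs k fT :&: fixs k fR2.
Proof.
apply/setP => c; rewrite !in_setI; apply/andP/andP => [[/fixsP h1 /fixsP h2]|[/fixsP h1 /fixsP h2]];
  split; apply/fixsP => //.
- have E : forall w, fT w = fT' (fR2 w) by vt.
  by move=> v; rewrite E h1 h2.
- have E : forall w, fT' w = fT (fR2 w) by vt.
  by move=> v; rewrite E h1 h2.
Qed.

Lemma arith (u u0 y1 y2 y3 y4 a b c d f g : nat) : u0 + u = a ->
  u0 = b + y1 + y2 + y3 + y4 -> c + y1 = d -> c + y2 = d -> f + y3 = g -> f + y4 = g ->
  u + b + 2 * d + 2 * g = a + 2 * c + 2 * f.
Proof. lia. Qed.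

Lemma count_D : #|[set c : coloring V k | distinguishing e c]| + k ^ uphalf (n ^ 2)
  + 2 * k ^ (n * uphalf n) + 2 * k ^ ((n * n.+1) %/ 2)
  = k ^ (n ^ 2) + 2 * k ^ (uphalf n ^ 2) + 2 * k ^ (uphalf n * uphalf n.+1).
Proof.
rewrite D_E.
have hC := cardsC Ucol.
rewrite card_ffun card_ord card_prod card_ord mulnn in hC.
have hU : #|Ucol| = #|fixs k fR2| + #|fixs k fH :\: fixs k fR2| + #|fixs k fV :\: fixs k fR2|
   + #|fixs k fT :\: fixs k fR2| + #|fixs k fT' :\: fixs k fR2|.
  rewrite /Ucol; apply: card_union5 => c h1 h2.
  - by apply: (pair1 (g1 := fH) (g2 := fV)) h1 h2; vt.
  - by apply: (pair2 (g1 := fH) (g2 := fT)) h1 h2; vt.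
  - by apply: (pair2 (g1 := fH) (g2 := fT')) h1 h2; vt.
  - by apply: (pair2 (g1 := fV) (g2 := fT)) h1 h2; vt.
  - by apply: (pair2 (g1 := fV) (g2 := fT')) h1 h2; vt.
  - by apply: (pair1 (g1 := fT) (g2 := fT')) h1 h2; vt.
have dH := cardsID (fixs k fR2) (fixs k fH).
have dV := cardsID (fixs k fR2) (fixs k fV).
have dT := cardsID (fixs k fR2) (fixs k fT).
have dT' := cardsID (fixs k fR2) (fixs k fT').
rewrite cV1' cV1 cV in dV; rewrite cV1 cH in dH.
rewrite cV2' cV2 cT' in dT'; rewrite cV2 cT in dT.
rewrite cX in hU.
move: hC hU dH dV dT dT'.
set a := k ^ _; set b := k ^ _; set c := k ^ _; set d := k ^ _; set f := k ^ _; set g := k ^ _.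
move=> hC hU dH dV dT dT'; exact: (arith hC hU dH dV dT dT').
Qed.

End Grid.

Unset Implicit Arguments.
Local Open Scope ring_scope.
Import GRing.Theory Num.Theory.

Theorem theorem5p2 (n k : nat) (hn : (3 <= n)%N) (hk : (2 <= k)%N) :
  (Phi (@grid_adj n) k)%:R =
    (1 / 8 : rat) *
    ( k%:R ^+ (n ^ 2) - k%:R ^+ uphalf (n ^ 2)
      - 2 * k%:R ^+ (n * uphalf n) - 2 * k%:R ^+ ((n * n.+1) %/ 2)
      + 2 * k%:R ^+ (uphalf n ^ 2) + 2 * k%:R ^+ (uphalf n * uphalf n.+1) ).
Proof.
have h8 := Phi_card hn k.
have hc := count_D hn k.
rewrite -h8 in hc.
have := congr1 (fun m : nat => m%:R : rat) hc.
rewrite !natrD !natrM !natrX /=.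
set P := (Phi _ _)%:R.
move=> h.
lra.
Qed.
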